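(* Let $P_n$ denote the path on $n$ vertices. Then for every $n\ge 3$, $f(P_n)=\left\lfloor\frac{n}{2}\right\rfloor$.
   Context: For a graph $G$, a family $\mathcal{P}$ of subsets of $E(G)$ is a separating path system of $G$ if every member is (the edge set of) a path in $G$ and for every pair of distinct edges $e,e'$ some $P\in\mathcal{P}$ contains exactly one of $e,e'$; $f(G)$ is the minimum size of a separating path system of $G$. *)

(* Defs.v *)
From mathcomp Require Import all_boot.
Set Implicit Arguments. Unset Strict Implicit. Unset Printing Implicit Defensive.

(* A (simple) graph on a finite vertex type T is given by a symmetric,
   irreflexive adjacency relation g.  An edge is the 2-element vertex set
   {x, y} with g x y. *)
Definition edges (T : finType) (g : rel T) : {set {set T}} :=
  [set [set p.1; p.2] | p in [pred p : T * T | g p.1 p.2]].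

Definition is_path_edges (T : finType) (g : rel T) (P : {set {set T}}) : Prop :=
  exists (x : T) (s : seq T),
    [/\ uniq (x :: s), path g x s &
        P = [set [set u.1; u.2] | u in zip (x :: s) s]].

Definition separating_path_system (T : finType) (g : rel T)
    (F : {set {set {set T}}}) : Prop :=
  (forall P, P \in F -> is_path_edges g P) /\
  (forall e e', e \in edges g -> e' \in edges g -> e != e' ->
     exists2 P, P \in F & (e \in P) != (e' \in P)).

Definition f_is (T : finType) (g : rel T) (k : nat) : Prop :=
  (exists F, separating_path_system g F /\ #|F| = k) /\
  (forall F, separating_path_system g F -> k <= #|F|).

Definition path_graph (n : nat) : rel 'I_n :=
  fun i j => (i.+1 == j) || (j.+1 == i).
Arguments path_graph n : clear implicits.

(* Main.v *)
Require Import Defs.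
From mathcomp Require Import all_boot zify.
Set Implicit Arguments. Unset Strict Implicit. Unset Printing Implicit Defensive.

Section S.
Variable K : nat.
Local Notation N := K.+1.
Local Notation g := (path_graph N).

Definition ed (u : nat) : {set 'I_N} := [set inord u; inord u.+1].

Lemma ed_inj u v : u.+1 < N -> v.+1 < N -> (ed u == ed v) = (u == v).
Proof.
move=> hu hv; apply/eqP/eqP => [E|->//].
have h1 : inord u \in ed v by rewrite -E /ed !inE eqxx.
have h2 : (inord u.+1 : 'I_N) \in ed v by rewrite -E /ed !inE eqxx orbT.
move: h1 h2; rewrite /ed !inE => /orP[] /eqP/(congr1 (@nat_of_ord N)) h1 /orP[] /eqP/(congr1 (@nat_of_ord N)) h2;
  move: h1 h2; rewrite !inordK //; try lia.
Qed.

Lemma ed_edge u : u.+1 < N -> ed u \in edges g.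
Proof.
move=> hu; apply/imsetP; exists (inord u, inord u.+1) => //.
by rewrite inE /= /path_graph !inordK ?eqxx //; lia.
Qed.

Lemma edge_ed e : e \in edges g -> exists2 u, u.+1 < N & e = ed u.
Proof.
case/imsetP => [[p q]]; rewrite inE /= /path_graph => /orP[] /eqP E ->.
  exists p; first by rewrite E.
  by rewrite /ed inord_val; congr [set _; _]; apply: val_inj; rewrite /= inordK // E.
exists q; first by rewrite E.
by rewrite /ed setUC inord_val; congr [set _; _]; apply: val_inj; rewrite /= inordK // E.
Qed.

Definition Pset (x : 'I_N) (s : seq 'I_N) : {set {set 'I_N}} :=
  [set [set u.1; u.2] | u in zip (x :: s) s].

Lemma mem_Pset x s e :
  reflect (exists2 i, i < size s & e = [set nth x (x :: s) i; nth x s i]) (e \in Pset x s).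
Proof.
have sz : size (zip (x :: s) s) = size s by rewrite size_zip /=; lia.
apply: (iffP imsetP) => [[p /(nthP (x, x)) [i hi <-] ->]|[i hi ->]].
  exists i; first by rewrite -sz.
  by rewrite nth_zip_cond hi.
exists (nth (x, x) (zip (x :: s) s) i); first by apply: mem_nth; rewrite sz.
by rewrite nth_zip_cond sz hi.
Qed.

Lemma path_mono (x : 'I_N) s : uniq (x :: s) -> path g x s ->
  (forall x0 i, i <= size s -> nat_of_ord (nth x0 (x :: s) i) = x + i) \/
  (forall x0 i, i <= size s -> nat_of_ord (nth x0 (x :: s) i) + i = x).
Proof.
elim: s x => [|y s IH] x.
  by move=> _ _; left => x0 [|i] //= _; rewrite addn0.
rewrite [uniq _]/= [path _ _ _]/= => /andP[xn uys] /andP[gxy pys].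
have xys : x \notin y :: s by [].
case: (IH y uys pys) => {IH} H; move: gxy; rewrite /path_graph => /orP[] /eqP gxy.
- left=> x0 [|i] hi /=; first by rewrite addn0.
  by rewrite (H x0 i) // -gxy; lia.
- case: s H xn xys uys pys => [|z s] H xn xys _ _.
    by right => x0 [|[|i]] //= _; lia.
  have := H x 1 isT; rewrite /= -gxy => h.
  exfalso; move: xys; rewrite !inE negb_or => /andP[_ /negP]; apply.
  have -> : x = z by apply: val_inj; rewrite /=; lia.
  exact: mem_head.
- case: s H xn xys uys pys => [|z s] H xn xys _ _.
    by left => x0 [|[|i]] //= _; lia.
  have := H x 1 isT; rewrite /= -gxy => h.
  exfalso; move: xys; rewrite !inE negb_or => /andP[_ /negP]; apply.
  have -> : x = z by apply: val_inj; rewrite /=; lia.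
  exact: mem_head.
- right=> x0 [|i] hi /=; first by rewrite addn0.
  have := H x0 i hi; rewrite -gxy /=; lia.
Qed.


Lemma ord_nat (o : 'I_N) m : nat_of_ord o = m -> o = inord m.
Proof. by move=> h; apply: val_inj; rewrite /= inordK // -h ltn_ord. Qed.

Definition repP (P : {set {set 'I_N}}) a b :=
  forall u, u.+1 < N -> (ed u \in P) = (a <= u < b).

Lemma Pset_rep (x : 'I_N) s f :
  (forall i, i < size s -> [set nth x (x :: s) i; nth x s i] = ed (f i) /\ (f i).+1 < N) ->
  forall u, u.+1 < N -> (ed u \in Pset x s) = [exists i : 'I_(size s), u == f i].
Proof.
move=> hf u hu; apply/mem_Pset/existsP => [[i hi]|[i /eqP ->]].
  case: (hf i hi) => -> hfi /eqP; rewrite ed_inj // => /eqP ->.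
  by exists (Ordinal hi).
by exists i => //; case: (hf i (ltn_ord i)).
Qed.

Lemma path_rep0 (x : 'I_N) (s : seq 'I_N) : uniq (x :: s) -> path g x s ->
  exists a b, [/\ a <= b, b < N & repP (Pset x s) a b].
Proof.
move=> us ps.
have nthS i : nth x s i = nth x (x :: s) i.+1 by [].
case: (path_mono us ps) => H.
- have hb : x + size s < N by rewrite -(H x) // ltn_ord.
  exists (nat_of_ord x), (x + size s); split => //; first exact: leq_addr.
  move=> u hu; rewrite (@Pset_rep x s (fun i => x + i)) //; last first.
    move=> i hi; have := ltn_ord (nth x (x :: s) i.+1); rewrite (H x i.+1 hi) => hlt; rewrite nthS (ord_nat (H x i _)) ?(ord_nat (H x i.+1 _)) //; last exact: ltnW.
    split; [by rewrite /ed addnS | lia].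
  apply/existsP/idP => [[i /eqP ->]|hab]; first by rewrite leq_addr ltn_add2l ltn_ord.
  have hi : u - x < size s by lia.
  by exists (Ordinal hi); apply/eqP => /=; lia.
- have hb : size s <= x by have := H x (size s) (leqnn _); lia.
  exists (x - size s), (nat_of_ord x); split => //; first exact: leq_subr.
  move=> u hu; rewrite (@Pset_rep x s (fun i => x - i.+1)) //; last first.
    move=> i hi; rewrite nthS.
    have e1 : nat_of_ord (nth x (x :: s) i) = (x - i.+1).+1. by have := H x i (ltnW hi); lia.
    have e2 : nat_of_ord (nth x (x :: s) i.+1) = x - i.+1 by have := H x i.+1 hi; lia.
    rewrite (ord_nat e1) (ord_nat e2) /ed setUC; split => //; have := ltn_ord x; lia.
  apply/existsP/idP => [[i /eqP ->]|hab]; first by have := ltn_ord i; lia.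
  have hi : x - u.+1 < size s by lia.
  by exists (Ordinal hi); apply/eqP => /=; lia.
Qed.

Lemma path_rep P : is_path_edges g P -> exists a b, [/\ a <= b, b < N & repP P a b].
Proof. by case=> x [s [us ps ->]]; exact: path_rep0. Qed.


Definition Iinc (a k : nat) : {set {set 'I_N}} :=
  Pset (inord a) [seq inord i | i <- iota a.+1 k].

Lemma Iinc_path a k : a + k < N -> is_path_edges g (Iinc a k).
Proof.
move=> hak; exists (inord a), [seq inord i | i <- iota a.+1 k]; split => //.
  change (uniq [seq (inord i : 'I_N) | i <- iota a k.+1]).
  rewrite (map_inj_in_uniq (s := iota a k.+1)) ?iota_uniq //.
  move=> i j; rewrite !mem_iota => hi hj /(congr1 (@nat_of_ord N)).
  rewrite !inordK //; lia.
elim: k a hak => [|k IH] a hak //=.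
rewrite IH; last lia.
by rewrite andbT /path_graph !inordK ?eqxx //; lia.
Qed.

Lemma Iinc_rep a k : a + k < N -> repP (Iinc a k) a (a + k).
Proof.
move=> hak u hu.
have nthI i : i <= k ->
    nth (inord a) (inord a :: [seq (inord j : 'I_N) | j <- iota a.+1 k]) i = inord (a + i).
  move=> hi; change (inord a :: _) with [seq (inord j : 'I_N) | j <- iota a k.+1].
  by rewrite (nth_map 0) ?size_iota // nth_iota.
rewrite /Iinc (@Pset_rep _ _ (fun i => a + i)) //.
  apply/existsP/idP => [[i /eqP ->]|hab].
    by case: i => i /=; rewrite size_map size_iota => hi; lia.
  have hi : u - a < size [seq (inord j : 'I_N) | j <- iota a.+1 k] by rewrite size_map size_iota; lia.
  by exists (Ordinal hi); apply/eqP => /=; lia.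
move=> i; rewrite size_map size_iota => hi.
have -> : nth (inord a) [seq (inord j : 'I_N) | j <- iota a.+1 k] i =
   nth (inord a) (inord a :: [seq (inord j : 'I_N) | j <- iota a.+1 k]) i.+1 by [].
rewrite !nthI //; last exact: ltnW.
by rewrite /ed addnS; split => //; lia.
Qed.

Definition repb (P : {set {set 'I_N}}) a b :=
  [forall u : 'I_N, (u.+1 < N) ==> ((ed u \in P) == (a <= u < b))].

Lemma repbP P a b : reflect (repP P a b) (repb P a b).
Proof.
apply: (iffP forallP) => [H u hu | H u].
  by have := H (Ordinal (ltnW hu)); rewrite /= hu => /eqP.
by apply/implyP => hu; rewrite H.
Qed.

Definition endp (P : {set {set 'I_N}}) (v : 'I_N) : bool :=
  [exists w : 'I_N, ((v < w) && repb P v w) || ((w < v) && repb P w v)].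

Lemma endp_intro P a b (v : 'I_N) : a < b -> b < N -> repP P a b ->
  (nat_of_ord v == a) || (nat_of_ord v == b) -> endp P v.
Proof.
move=> hab hb /repbP hr /orP[] /eqP ev; apply/existsP.
  by exists (Ordinal hb); rewrite /= ev hab hr.
have ha : a < N by lia.
by exists (Ordinal ha); rewrite /= ev hab hr orbT.
Qed.

Lemma endp_elim P v : endp P v ->
  exists a b, [/\ a < b, b < N, repP P a b & (nat_of_ord v == a) || (nat_of_ord v == b)].
Proof.
case/existsP => w /orP[] /andP[h /repbP r].
  by exists (nat_of_ord v), (nat_of_ord w); rewrite eqxx.
by exists (nat_of_ord w), (nat_of_ord v); rewrite eqxx orbT ltn_ord.
Qed.

Lemma rep_uniq P a b a' b' : a < b -> b < N -> a' < b' -> b' < N ->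
  repP P a b -> repP P a' b' -> a = a' /\ b = b'.
Proof.
move=> h1 h2 h3 h4 r r'.
have e1 := r a; have e2 := r' a; have e3 := r a'; have e4 := r' a'.
have e5 := r b.-1; have e6 := r' b.-1; have e7 := r b'.-1; have e8 := r' b'.-1.
have f1 : (a' <= a < b') by rewrite -e2 ?e1 ?leqnn //; lia.
have f2 : (a <= a' < b) by rewrite -e3 ?e4 ?leqnn //; lia.
have f3 : (a' <= b.-1 < b') by rewrite -e6 ?e5 //; lia.
have f4 : (a <= b'.-1 < b) by rewrite -e7 ?e8 //; lia.
lia.
Qed.

Lemma card_endp P : #|[set v | endp P v]| <= 2.
Proof.
case: (set_0Vmem [set v | endp P v]) => [->|[v]]; first by rewrite cards0.
rewrite inE => /endp_elim [a [b [hab hb hr _]]].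
apply: (@leq_trans #|[set (inord a : 'I_N); inord b]|); last by rewrite cards2; case: (_ != _).
apply: subset_leq_card; apply/subsetP => w; rewrite !inE => /endp_elim [a' [b' [h1 h2 h3 h4]]].
have [ea eb] := rep_uniq hab hb h1 h2 hr h3.
subst a' b'.
by case/orP: h4 => /eqP/ord_nat ->; rewrite eqxx ?orbT.
Qed.

Lemma card_cup (F : {set {set {set 'I_N}}}) :
  #|\bigcup_(P in F) [set v | endp P v]| <= 2 * #|F|.
Proof.
apply: (@leq_trans (\sum_(P in F) #|[set v | endp P v]|)).
  apply: (big_ind2 (fun (X : {set 'I_N}) n => #|X| <= n)); first by rewrite cards0.
    by move=> X1 n1 X2 n2 h1 h2; rewrite cardsU; lia.
  by [].
apply: (@leq_trans (\sum_(P in F) 2)); first by apply: leq_sum => P _; exact: card_endp.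
by rewrite sum_nat_const mulnC.
Qed.


Lemma sep_nat m u u' : 2 * m <= N <= 2 * m + 1 -> 0 < m -> u.+1 < N -> u'.+1 < N -> u < u' ->
  exists j, j < m /\ (j <= u < j + m) != (j <= u' < j + m).
Proof.
move=> h0 hm hu hu' lt.
case: (ltnP u' m) => h1; first by exists u'; lia.
case: (ltnP u m) => h2; first by exists 0; lia.
by exists (u.+1 - m); lia.
Qed.

Lemma upper : 1 < K -> exists F, separating_path_system g F /\ #|F| = N %/ 2.
Proof.
move=> hK; set m := N %/ 2.
have hm : 2 * m <= N <= 2 * m + 1 by rewrite /m; lia.
have hm0 : 0 < m by rewrite /m; lia.
have jm (j : 'I_m) : j + m < N by have := ltn_ord j; lia.
exists [set Iinc j m | j : 'I_m]; split; last first.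
  rewrite card_imset ?card_ord // => j j' E; apply: val_inj => /=.
  have r1 := Iinc_rep (jm j); have r2 := Iinc_rep (jm j').
  have a1 := r1 j; have a2 := r2 j; have a3 := r1 j'; have a4 := r2 j'.
  rewrite E in a1 a3; have := ltn_ord j; have := ltn_ord j' => l1 l2.
  have f1 : (j' <= j < j' + m) by rewrite -a2 ?a1 ?leqnn //; lia.
  have f2 : (j <= j' < j + m) by rewrite -a3 ?a4 ?leqnn //; lia.
  lia.
split.
  by move=> P /imsetP [j _ ->]; exact: Iinc_path.
move=> e e' /edge_ed [u hu ->] /edge_ed [u' hu' ->]; rewrite ed_inj // => ne.
have [j [hj hne]] : exists j, j < m /\ (j <= u < j + m) != (j <= u' < j + m).
  case: (ltngtP u u') => h; first exact: sep_nat.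
    by have [j [h1 h2]] := sep_nat hm hm0 hu' hu h; exists j; rewrite eq_sym.
  by rewrite h eqxx in ne.
exists (Iinc j m); first by apply/imsetP; exists (Ordinal hj).
by rewrite !(Iinc_rep (jm (Ordinal hj))).
Qed.

Lemma lower F : 1 < K -> separating_path_system g F -> K <= 2 * #|F|.
Proof.
move=> hK [Fp Fs].
have Frep P : P \in F -> exists a b, [/\ a <= b, b < N & repP P a b].
  by move=> hP; exact: path_rep (Fp P hP).
have sep u u' : u.+1 < N -> u'.+1 < N -> u != u' ->
    exists2 P, P \in F & (ed u \in P) != (ed u' \in P).
  by move=> hu hu' ne; apply: Fs; rewrite ?ed_edge ?ed_inj.
have interior (v : 'I_N) : 0 < v -> v.+1 < N -> exists2 P, P \in F & endp P v.
  move=> h0 h1; have [|||P PF] := sep v.-1 v; try lia.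
  have [a [b [hab hb hr]]] := Frep P PF.
  rewrite !hr; try lia.
  move=> hne; exists P => //; apply: (@endp_intro P a b) => //; lia.
have ends : (exists2 P, P \in F & endp P ord0) \/ (exists2 P, P \in F & endp P ord_max).
  have [|||P PF] := sep 0 K.-1; try lia.
  have [a [b [hab hb hr]]] := Frep P PF.
  rewrite !hr; try lia.
  move=> hne.
  have : ((a == 0) && (0 < b)) || ((b == K) && (a < b)) by lia.
  case/orP => /andP [h1 h2].
    by left; exists P => //; apply: (@endp_intro P a b) => //=; lia.
  by right; exists P => //; apply: (@endp_intro P a b) => //=; lia.
have main (w : 'I_N) : [set~ w] \subset \bigcup_(P in F) [set v | endp P v] -> K <= 2 * #|F|.
  move=> sub; apply: leq_trans (card_cup F).
  by have := subset_leq_card sub; rewrite cardsC1 card_ord.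
case: (boolP [exists P in F, endp P ord0]) => hex.
  apply: (main ord_max); apply/subsetP => v; rewrite !inE => vne; apply/bigcupP.
  have vK : nat_of_ord v != K by apply: contra vne => /eqP h; apply/eqP; apply: val_inj.
  case: (posnP v) => v0.
    have -> : v = ord0 by apply: val_inj.
    by case/exists_inP: hex => P PF hP; exists P; rewrite ?inE.
  have h1 : v.+1 < N by have := ltn_ord v; lia.
  have [P PF hP] := interior v v0 h1.
  by exists P; rewrite ?inE.
apply: (main ord0); apply/subsetP => v; rewrite !inE => vne; apply/bigcupP.
have v0 : 0 < v by rewrite lt0n; apply: contra vne => /eqP h; apply/eqP; apply: val_inj.
case: (v =P ord_max) => [->|vK].
  case: ends => [[P PF hP]|[P PF hP]].
    by case/negP: hex; apply/exists_inP; exists P.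
  by exists P; rewrite ?inE.
have h1 : v.+1 < N.
  have := ltn_ord v; have : nat_of_ord v != K by apply/eqP => h; apply: vK; apply: val_inj.
  lia.
have [P PF hP] := interior v v0 h1.
by exists P; rewrite ?inE.
Qed.

End S.

Theorem proposition7p2 (n : nat) : 3 <= n -> f_is (path_graph n) (n %/ 2).
Proof.
case: n => [|[|[|n']]] // _.
split.
  have [F [h1 h2]] := @upper n'.+2 isT.
  by exists F.
move=> F /(@lower n'.+2 F isT) h; lia.
Qed.
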